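(* Let $G$ be a proper interval graph with no twin vertices, let $\sigma$ be a proper interval ordering of $G$, let each node of the line-incompatibility graph $\widehat{G}$ carry a positive weight, and let $I_{\widehat{G}}$ be a maximum-weight independent set of $\widehat{G}$. Let $x,y,z$ be vertices of $G$ with $x\prec y\prec z$ in $\sigma$. If $xz\in I_{\widehat{G}}$, then $xy\in I_{\widehat{G}}$ or $yz\in I_{\widehat{G}}$.
   Context: All graphs are finite, simple and undirected. Two adjacent vertices $u,v$ are twins if $N[u]=N[v]$. A vertex ordering $\sigma$ of $G$ is a proper interval ordering if for all vertices $x\prec y\prec z$ in $\sigma$, $\{x,z\}\in E(G)$ implies $\{x,y\},\{y,z\}\in E(G)$; a graph is a proper interval graph if and only if it admits a proper interval ordering. The line-incompatibility graph $\widehat{G}$ of $G$ has one node $uv$ for each edge $\{u,v\}$ of $G$, two nodes being adjacent iff the corresponding edges are of the form $\{u,v\},\{v,w\}$ with $\{u,w\}\notin E(G)$. A maximum-weight independent set is an independent set maximizing the total weight of its nodes. *)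

(* Defs.v *)
From mathcomp Require Import all_boot all_order all_algebra.
Set Implicit Arguments. Unset Strict Implicit. Unset Printing Implicit Defensive.
Import Order.TTheory GRing.Theory Num.Theory.

Definition simple_graph (T : finType) (e : rel T) : Prop :=
  symmetric e /\ irreflexive e.

Definition closed_nbhd (T : finType) (e : rel T) (u : T) : {set T} :=
  [set w | (w == u) || e u w].

Definition twins (T : finType) (e : rel T) (u v : T) : Prop :=
  e u v /\ closed_nbhd e u = closed_nbhd e v.

Definition twin_free (T : finType) (e : rel T) : Prop :=
  forall u v : T, ~ twins e u v.

(* A vertex ordering sigma is encoded by an injective rank function
   sigma : T -> nat;  x \prec y  iff  sigma x < sigma y. *)
Definition proper_interval_ordering (T : finType) (e : rel T) (sigma : T -> nat) : Prop :=
  injective sigma /\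
  forall x y z : T, sigma x < sigma y -> sigma y < sigma z -> e x z ->
    e x y /\ e y z.

Definition lig_node (T : finType) (e : rel T) (A : {set T}) : Prop :=
  exists u v : T, e u v /\ A = [set u; v].

Definition lig_adj (T : finType) (e : rel T) (A B : {set T}) : Prop :=
  exists u v w : T, [/\ e u v, e v w, u != w & ~~ e u w] /\
    A = [set u; v] /\ B = [set v; w].

Definition lig_independent (T : finType) (e : rel T) (I : {set {set T}}) : Prop :=
  (forall A, A \in I -> lig_node e A) /\
  (forall A B, A \in I -> B \in I -> ~ lig_adj e A B).

Definition lig_max_weight_independent (R : numDomainType) (T : finType) (e : rel T)
    (wt : {set T} -> R) (I : {set {set T}}) : Prop :=
  lig_independent e I /\
  forall J : {set {set T}}, lig_independent e J ->
    (\sum_(A in J) wt A <= \sum_(A in I) wt A)%R.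

(* Main.v *)
Require Import Defs.
From mathcomp Require Import all_boot all_order all_algebra.
From Stdlib Require Import Classical.
Set Implicit Arguments. Unset Strict Implicit. Unset Printing Implicit Defensive.
Import Order.TTheory GRing.Theory Num.Theory.

Lemma set2_eqP (T : finType) (a b c d : T) :
  [set a; b] = [set c; d] -> (a = c /\ b = d) \/ (a = d /\ b = c).
Proof.
move=> E.
have ha : a \in [set c; d] by rewrite -E !inE eqxx.
have hb : b \in [set c; d] by rewrite -E !inE eqxx orbT.
have hc : c \in [set a; b] by rewrite E !inE eqxx.
have hd : d \in [set a; b] by rewrite E !inE eqxx orbT.
move: ha hb hc hd; rewrite !inE.
case/orP=>/eqP ->; case/orP=>/eqP ->; case/orP=>/eqP ?; case/orP=>/eqP ?; subst; auto.
Qed.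

Lemma node_edge (T : finType) (e : rel T) a b :
  simple_graph e -> lig_node e [set a; b] -> e a b.
Proof.
move=> [sy _] [u [v [huv E]]].
by case: (set2_eqP E) => [[-> ->]|[-> ->]] //; rewrite sy.
Qed.

Lemma conflict (T : finType) (e : rel T) a b (B : {set T}) :
  symmetric e ->
  (lig_adj e [set a; b] B \/ lig_adj e B [set a; b]) ->
  exists w, (B = [set a; w] /\ ~~ e b w /\ w != b) \/
            (B = [set b; w] /\ ~~ e a w /\ w != a).
Proof.
move=> sy [[u [v [w [[huv hvw huw nuw] [EA EB]]]]]|[u [v [w [[huv hvw huw nuw] [EB EA]]]]]].
- exists w; case: (set2_eqP EA) => [[-> ->]|[-> ->]].
  + by right; rewrite eq_sym.
  + by left; rewrite eq_sym.
- exists u; case: (set2_eqP EA) => [[-> ->]|[-> ->]].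
  + by left; rewrite EB setUC sy.
  + by right; rewrite EB setUC sy.
Qed.

Lemma augment (R : realDomainType) (T : finType) (e : rel T)
    (wt : {set T} -> R) (I : {set {set T}}) (A : {set T}) :
  (forall A, lig_node e A -> (0 < wt A)%R) ->
  lig_max_weight_independent e wt I ->
  A \notin I -> lig_node e A ->
  (forall B, B \in I -> ~ lig_adj e A B /\ ~ lig_adj e B A) -> False.
Proof.
move=> pos [[Inode Iadj] Imax] AI An Hc.
have noself : ~ lig_adj e A A.
  move=> [u [v [w [[huv hvw huw nuw] [E1 E2]]]]].
  rewrite E1 in E2; case: (set2_eqP E2) => [[? ?]|[? ?]]; subst; by rewrite eqxx in huw.
have J : lig_independent e (A |: I).
  split.
  - move=> C; rewrite !inE => /orP[/eqP ->|]; [exact: An| exact: Inode].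
  - move=> C D; rewrite !inE => /orP[/eqP ->|CI] /orP[/eqP ->|DI] //.
    + exact: (Hc D DI).1.
    + exact: (Hc C CI).2.
    + exact: Iadj.
have := Imax _ J; rewrite big_setU1 //= => H.
have := pos _ An; move: H.
set S := (\sum_(i in I) wt i)%R.
rewrite -{2}(add0r S) lerD2r => H1 H2.
by have := lt_le_trans H2 H1; rewrite ltxx.
Qed.

Lemma half (R : realDomainType) (T : finType) (e : rel T) (lt : T -> T -> Prop)
    (wt : {set T} -> R) (I : {set {set T}}) (x y z : T) :
  simple_graph e ->
  (forall a b c, lt a b -> lt b c -> e a c -> e a b /\ e b c) ->
  (forall a b, a != b -> lt a b \/ lt b a) ->
  (forall A, lig_node e A -> (0 < wt A)%R) ->
  lig_max_weight_independent e wt I ->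
  lt x y -> lt y z ->
  [set x; z] \in I -> [set x; y] \notin I -> [set y; z] \notin I ->
  exists w, [/\ [set y; w] \in I, e y w, ~~ e x w & lt z w].
Proof.
move=> sg HP Htri pos Hmax lxy lyz Hxz Hxy Hyz.
have sy := sg.1; have irr := sg.2.
have [[Inode Iadj] _] := Hmax.
have exz : e x z by apply: node_edge sg (Inode _ Hxz).
have [exy eyz] := HP _ _ _ lxy lyz exz.
destruct (classic (exists B, B \in I /\
   (lig_adj e [set x; y] B \/ lig_adj e B [set x; y]))) as [[B [BI HB]]|Hn]; last first.
  exfalso; apply: (augment pos Hmax Hxy); first by exists x, y.
  move=> B BI; split => H; apply: Hn; exists B; auto.
have [w [[EB [nyw wy]]|[EB [nxw wx]]]] := conflict sy HB.
- subst B; have exw := node_edge sg (Inode _ BI).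
  have ezw : e z w.
    case: (boolP (z == w)) => [/eqP zw|zw].
      by subst w; rewrite eyz in nyw.
    apply/negPn/negP => nzw; apply: (Iadj _ _ Hxz BI).
    exists z, x, w; split; first by split => //; rewrite sy.
    by rewrite setUC.
  exfalso; case: (Htri w y wy) => [lwy|lyw].
  + have [ewy _] := HP _ _ _ lwy lyz (etrans (sy w z) ezw).
    by rewrite sy ewy in nyw.
  + have [_ eyw] := HP _ _ _ lxy lyw exw.
    by rewrite eyw in nyw.
- subst B; have eyw := node_edge sg (Inode _ BI).
  exists w; split => //.
  case: (Htri w x wx) => [lwx|lxw].
    have [ewx _] := HP _ _ _ lwx lxy (etrans (sy w y) eyw).
    by rewrite sy ewx in nxw.
  case: (boolP (w == z)) => [/eqP wz|wz]; first by subst w; rewrite BI in Hyz.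
  case: (Htri w z wz) => [lwz|//].
  have [exw _] := HP _ _ _ lxw lwz exz.
  by rewrite exw in nxw.
Qed.

Theorem lemma7 (R : realDomainType) (T : finType) (e : rel T) (sigma : T -> nat)
    (wt : {set T} -> R) (I : {set {set T}}) (x y z : T) :
  simple_graph e ->
  twin_free e ->
  proper_interval_ordering e sigma ->
  (forall A, lig_node e A -> (0 < wt A)%R) ->
  lig_max_weight_independent e wt I ->
  sigma x < sigma y -> sigma y < sigma z ->
  [set x; z] \in I ->
  [set x; y] \in I \/ [set y; z] \in I.
Proof.
move=> sg _ [inj HP] pos Hmax lxy lyz Hxz.
have sy := sg.1.
case Hxy: ([set x; y] \in I); first by left.
case Hyz: ([set y; z] \in I); first by right.
exfalso.
have tri : forall a b, a != b -> sigma a < sigma b \/ sigma b < sigma a.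
  move=> a b ab; case: (ltngtP (sigma a) (sigma b)); auto.
  by move/inj/eqP; rewrite (negbTE ab).
have [w [wI eyw nxw lzw]] := @half R T e (fun a b => sigma a < sigma b) wt I x y z
  sg HP tri pos Hmax lxy lyz Hxz (negbT Hxy) (negbT Hyz).
have HP' : forall a b c, sigma b < sigma a -> sigma c < sigma b -> e a c -> e a b /\ e b c.
  move=> a b c h1 h2 eac; rewrite sy in eac.
  have [h3 h4] := HP _ _ _ h2 h1 eac; split; by rewrite sy.
have tri' : forall a b, a != b -> sigma b < sigma a \/ sigma a < sigma b.
  move=> a b ab; case: (tri a b ab); auto.
have Hzx : [set z; x] \in I by rewrite setUC.
have Hzy : [set z; y] \notin I by rewrite setUC Hyz.
have Hyx : [set y; x] \notin I by rewrite setUC Hxy.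
have [w' [wI' eyw' nzw' lxw']] := @half R T e (fun a b => sigma b < sigma a) wt I z y x
  sg HP' tri' pos Hmax lyz lxy Hzx Hzy Hyx.
have [[_ Iadj] _] := Hmax.
have wI2 : [set w'; y] \in I by rewrite setUC.
apply: (Iadj _ _ wI2 wI).
have lxw : sigma x < sigma w by apply: ltn_trans lzw; apply: ltn_trans lyz.
exists w', y, w; split => //; split => //.
- by rewrite sy.
- apply/eqP => E; subst w'; have := ltn_trans lxw' lxw; by rewrite ltnn.
- apply/negP => ew; have [exw' _] := HP _ _ _ lxw' lxw ew.
  have [_ exw] := HP _ _ _ lxw' lxw ew.
  by rewrite exw in nxw.
Qed.
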